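(* For every composition $\alpha$ and all $a,b\in\mathbb C$, $\omega(\widehat{\mathcal B}(a,b)_\alpha)=\widehat{\mathcal B}(-a,a+b)_{\alpha^r}$.
   Context: $\mathsf{NSym}$ is the algebra of noncommutative symmetric functions over $\mathbb C$ with basis $H_\alpha=H_{\alpha_1}\cdots H_{\alpha_l}$; $\Lambda_n=\sum_{\beta}(-1)^{n-\ell(\beta)}H_\beta$ (sum over compositions $\beta$ of $n$) and $\Lambda_\alpha=\Lambda_{\alpha_1}\cdots\Lambda_{\alpha_l}$. $\omega:\mathsf{NSym}\to\mathsf{NSym}$ is the involutive algebra anti-automorphism with $\omega(H_\alpha)=\Lambda_{\alpha^r}$, where $\alpha^r=(\alpha_l,\dots,\alpha_1)$. For a composition $\alpha$ of $n$, $\mathrm{set}(\alpha)=\{\alpha_1,\alpha_1+\alpha_2,\dots,\alpha_1+\dots+\alpha_{l-1}\}$, $\ell(\alpha)=l$, and $\beta\preceq\alpha$ means $\mathrm{set}(\alpha)\subseteq\mathrm{set}(\beta)$. Define $\widehat{\mathcal B}(a,b)_\alpha=\sum_{\beta\preceq\alpha}a^{n-\ell(\beta)}b^{\ell(\beta)-\ell(\alpha)}H_\beta$ (convention $0^0=1$), and $\widehat{\mathcal B}(a,b)$ of the empty composition is $1$. *)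

(* Defs.v *)
From HB Require Import structures.
From mathcomp Require Import all_boot all_order all_algebra.
From mathcomp Require Import complex.
From mathcomp Require Import reals.
Set Implicit Arguments. Unset Strict Implicit. Unset Printing Implicit Defensive.
Import Order.TTheory GRing.Theory Num.Theory.
Local Open Scope ring_scope.

Definition is_comp (n : nat) (c : seq nat) : bool :=
  all (fun k => (0 < k)%N) c && (sumn c == n).

Fixpoint seqs_len (l n : nat) : seq (seq nat) :=
  match l with
  | 0 => [:: [::]]
  | l'.+1 => [seq x :: s | x <- iota 1 n, s <- seqs_len l' n]
  end.

Definition comps (n : nat) : seq (seq nat) :=
  [seq c <- flatten [seq seqs_len l n | l <- iota 0 n.+1] | is_comp n c].

Definition setc (al : seq nat) : seq nat :=
  [seq sumn (take i al) | i <- iota 1 (size al).-1].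

(* beta ⪯ alpha  iff  set(alpha) ⊆ set(beta) *)
Definition refines (be al : seq nat) : bool :=
  all (fun s => s \in setc be) (setc al).

(* An element of NSym is represented by a finite formal sum  sum_i c_i H_{beta_i},
   i.e. a list of pairs (c_i, beta_i); two representations denote the same
   element iff they have the same coefficient on every basis element H_beta. *)
Section NSym.
Variable C : comNzRingType.

Definition nsym := seq (C * seq nat).

Definition nsym_coef (x : nsym) (be : seq nat) : C :=
  \sum_(p <- x | p.2 == be) p.1.

Definition nsym_eq (x y : nsym) : Prop := forall be, nsym_coef x be = nsym_coef y be.

Definition nsym_one : nsym := [:: (1, [::])].
Definition nsym_H (al : seq nat) : nsym := [:: (1, al)].
Definition nsym_scale (c : C) (x : nsym) : nsym := [seq (c * p.1, p.2) | p <- x].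
Definition nsym_mul (x y : nsym) : nsym :=
  [seq (p.1 * q.1, p.2 ++ q.2) | p <- x, q <- y].

Definition Lam (n : nat) : nsym :=
  [seq ((-1) ^+ (n - size be), be) | be <- comps n].

Definition LamC (al : seq nat) : nsym := foldr nsym_mul nsym_one [seq Lam k | k <- al].

(* omega: the linear (anti-)automorphism with omega(H_alpha) = Lambda_{alpha^r},
   extended C-linearly *)
Definition omega (x : nsym) : nsym :=
  flatten [seq nsym_scale p.1 (LamC (rev p.2)) | p <- x].

(* \hat B(a,b)_alpha = sum_{beta ⪯ alpha} a^{n - l(beta)} b^{l(beta) - l(alpha)} H_beta,
   n = |alpha|; for alpha empty this is 1 = H_{[::]} (with 0^0 = 1). *)
Definition Bhat (a b : C) (al : seq nat) : nsym :=
  [seq (a ^+ (sumn al - size be) * b ^+ (size be - size al), be)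
  | be <- comps (sumn al) & refines be al].

End NSym.

(* Main.v *)
Require Import Defs.
From HB Require Import structures.
From mathcomp Require Import all_boot all_order all_algebra.
From mathcomp Require Import zify ring.
Set Implicit Arguments. Unset Strict Implicit. Unset Printing Implicit Defensive.

Notation posl s := (all (fun k => (0 < k)%N) s).

Fixpoint rf (g b : seq nat) : bool :=
  match g, b with
  | [::], [::] => true
  | x :: g', k :: b' => (0 < x) && (if x == k then rf g' b' else if x < k then rf g' ((k - x) :: b') else false)
  | _, _ => false
  end.

Lemma size_le_sumn s : posl s -> size s <= sumn s.
Proof. elim: s => //= x s IH /andP[x0 /IH]; lia. Qed.

Lemma rf1 g b : rf g b -> [/\ posl g, posl b, sumn g = sumn b & size b <= size g].
Proof.
elim: g b => [|x g IH] [|k b] //=.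
move=> /andP[x0]; case: eqP => [<- /IH [pg pb sg ss]|xk].
  by rewrite /= x0; split => //; lia.
case: ltnP => // xk2 /IH [pg /= /andP[_ pb] sg ss].
by rewrite /= x0 pg pb /= (leq_trans x0 (ltnW xk2)); split => //; lia.
Qed.

Lemma rf_nil g : rf g [::] = (g == [::]).
Proof. by case: g. Qed.

Lemma rf_nil_l b : rf [::] b = (b == [::]).
Proof. by case: b. Qed.

Lemma setc_cons2 x y s : setc (x :: y :: s) = x :: map (addn x) (setc (y :: s)).
Proof.
rewrite /setc /= addn0; congr (_ :: _).
rewrite -map_comp -(addn1 1) iotaDl -map_comp; apply: eq_map => i /=.
by [].
Qed.

Lemma setc1 x : setc [:: x] = [::]. Proof. by []. Qed.

Lemma setc_pos s t : posl s -> t \in setc s -> 0 < t.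
Proof.
case: s => [|y s] //= /andP[y0 _]; rewrite /setc => /mapP[i]; rewrite mem_iota => /andP[i1 _] ->.
case: i i1 => //= i _; lia.
Qed.

Lemma take_sumn_le i s : sumn (take i s) <= sumn s.
Proof. by rewrite -{2}(cat_take_drop i s) sumn_cat leq_addr. Qed.

Lemma setc_le s t : t \in setc s -> t <= sumn s.
Proof. by move=> /mapP[i _ ->]; apply: take_sumn_le. Qed.

Lemma mem_map_addn x m S : x <= m -> (m \in map (addn x) S) = (m - x \in S).
Proof.
move=> xm; apply/mapP/idP => [[v vS ->]|H]; first by rewrite addKn.
by exists (m - x) => //; lia.
Qed.

Lemma nmem_map_addn x m S : m < x -> (m \in map (addn x) S) = false.
Proof. by move=> mx; apply/mapP => [[v _ e]]; lia. Qed.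

Lemma rf_cons x g k b : rf (x :: g) (k :: b) =
  (0 < x) && (if x == k then rf g b else if x < k then rf g ((k - x) :: b) else false).
Proof. by []. Qed.
Lemma rf_nn : rf [::] [::]. Proof. by []. Qed.
Lemma rf_cn x g : rf (x :: g) [::] = false. Proof. by []. Qed.
Lemma rf_nc k b : rf [::] (k :: b) = false. Proof. by []. Qed.
Arguments rf : simpl never.
Arguments setc : simpl never.

Lemma rf_refines g b : posl g -> posl b -> sumn g = sumn b -> refines g b = rf g b.
Proof.
rewrite /refines.
elim: g b => [|x g IH] b.
  case: b => [|k b] //= _ /andP[k0 _]; lia.
case: b => [|k b]; first by move=> /= /andP[x0 _]; lia.
move=> /= /andP[x0 pg] /andP[k0 pb] /= sm.
rewrite rf_cons x0 /=.
case: g IH pg sm => [|y g] IH pg sm.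
  case: b pb sm => [|z b] pb /= sm.
    by rewrite rf_nn; have -> : x == k by apply/eqP; lia.
  by rewrite !rf_nc; case: (x == k); case: (x < k).
rewrite setc_cons2.
have yp : 0 < y by move: pg => /andP[].
case: b pb sm => [|z b] pb sm; simpl in sm.
  rewrite /=.
  have -> : (x == k) = false by apply/eqP; lia.
  have -> : x < k by lia.
  rewrite -IH //=; [apply/andP; split => //; lia | lia].
rewrite setc_cons2 /=.
have tp t : t \in setc (z :: b) -> 0 < t by apply: setc_pos.
case: (ltngtP x k) => xk.
- rewrite -IH //; last 2 first.
  + rewrite /= subn_gt0 xk; exact: pb.
  + rewrite /=; lia.
  rewrite setc_cons2 /=.
  rewrite in_cons mem_map_addn ?(ltnW xk) // (gtn_eqF xk) /=; congr (_ && _).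
  rewrite (all_map (addn k)) (all_map (addn (k - x))); apply: eq_in_all => t tin; have t0 := tp t tin; rewrite /=.
  rewrite in_cons mem_map_addn; last by lia.
  have -> : (k + t == x) = false by apply/eqP; lia.
  by rewrite /= addnC -addnBA ?(ltnW xk) // addnC.
- by rewrite in_cons nmem_map_addn // (ltn_eqF xk).
- subst x; rewrite -IH //; last by rewrite /=; lia.
  rewrite in_cons eqxx /= (all_map (addn k)); apply: eq_in_all => t tin; have t0 := tp t tin.
  rewrite /= in_cons mem_map_addn; last by lia.
  have -> : (k + t == k) = false by apply/eqP; lia.
  by rewrite /= addKn.
Qed.

Lemma sumn_drop j s : sumn (drop j s) = sumn s - sumn (take j s).
Proof. by rewrite -{2}(cat_take_drop j s) sumn_cat addKn. Qed.

Lemma mem_setc_rev s t : (t \in setc (rev s)) = (t \in map (subn (sumn s)) (setc s)).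
Proof.
rewrite /setc size_rev; apply/mapP/mapP => [[i]|[u /mapP[i ii ->] ->]].
- rewrite mem_iota => ii ->; exists (sumn (take (size s - i) s)).
    apply: map_f; rewrite mem_iota; case: (size s) ii => //= n; lia.
  by rewrite take_rev sumn_rev sumn_drop.
- move: ii; rewrite mem_iota => ii; exists (size s - i).
    rewrite mem_iota; case: (size s) ii => //= n; lia.
  rewrite take_rev sumn_rev sumn_drop; congr (_ - sumn (take _ _)).
  case: (size s) ii => //= n; lia.
Qed.

Lemma mem_map_subn n u S : u <= n -> all (fun v => v <= n) S ->
  (n - u \in map (subn n) S) = (u \in S).
Proof.
move=> un /allP SP; apply/mapP/idP => [[v vS e]|uS]; last by exists u.
have := SP v vS; move=> vn; have -> : u = v by lia.
exact: vS.
Qed.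

Lemma setc_all_le s : all (fun v => v <= sumn s) (setc s).
Proof. by apply/allP => t /setc_le. Qed.

Lemma refines_rev g b : sumn g = sumn b ->
  refines (rev g) (rev b) = refines g b.
Proof.
move=> sm; rewrite /refines (eq_all_r (mem_setc_rev b)) all_map.
apply: eq_in_all => t tin /=.
rewrite mem_setc_rev sm mem_map_subn //; first exact: setc_le.
by rewrite -sm; exact: setc_all_le.
Qed.

Lemma rf_rev1 g b : rf g b -> rf (rev g) (rev b).
Proof.
move=> H; have [pg pb sm _] := rf1 H.
rewrite -rf_refines ?all_rev ?sumn_rev // refines_rev // rf_refines //.
Qed.

Lemma rf_rev g b : rf (rev g) (rev b) = rf g b.
Proof.
apply/idP/idP => [H|]; last exact: rf_rev1.
by rewrite -(revK g) -(revK b); apply: rf_rev1.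
Qed.

Lemma elem_le_sumn s y : y \in s -> y <= sumn s.
Proof.
elim: s => //= x s IH; rewrite in_cons => /orP[/eqP ->|/IH]; lia.
Qed.

Lemma mem_seqs_len l n s : size s = l -> all (fun y => 0 < y <= n) s -> s \in seqs_len l n.
Proof.
elim: l s => [|l IH] [|y s] //= [sz] /andP[yn sn].
apply/allpairsP; exists (y, s) => /=; split => //; last exact: IH.
by rewrite mem_iota; lia.
Qed.

Lemma seqs_len_size l n s : s \in seqs_len l n -> size s = l.
Proof.
elim: l s => [|l IH] s /=; first by rewrite inE => /eqP ->.
by move=> /allpairsP[[y t] /= [_ /IH <- ->]].
Qed.

Lemma uniq_seqs_len l n : uniq (seqs_len l n).
Proof.
elim: l => //= l IH; apply: allpairs_uniq => //; first exact: iota_uniq.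
by move=> [x s] [y t] _ _ /= [-> ->].
Qed.

Lemma uniq_flat_seqs n m k : uniq (flatten [seq seqs_len l n | l <- iota m k]).
Proof.
elim: k m => //= k IH m; rewrite cat_uniq uniq_seqs_len IH andbT /=.
apply/hasPn => s /flattenP[t /mapP[l lin ->] /seqs_len_size sz].
apply/negP => /seqs_len_size; move: lin; rewrite mem_iota; lia.
Qed.

Lemma uniq_comps n : uniq (comps n).
Proof. by rewrite /comps filter_uniq // uniq_flat_seqs. Qed.

Lemma mem_comps n s : (s \in comps n) = is_comp n s.
Proof.
rewrite /comps mem_filter; case ic: (is_comp n s) => //.
move: ic => /andP[ps /eqP sn].
apply/flattenP; exists (seqs_len (size s) n).
  apply: (map_f (fun l => seqs_len l n)); rewrite mem_iota /= add0n ltnS -sn; exact: size_le_sumn.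
apply: mem_seqs_len => //; apply/allP => y ys.
rewrite (allP ps y ys) /= -sn; exact: elem_le_sumn.
Qed.

Lemma comps0 : comps 0 = [:: [::]].
Proof. by []. Qed.

Lemma uniq_flat_cons (s : seq nat) (S : nat -> seq (seq nat)) :
  uniq s -> (forall j, uniq (S j)) ->
  uniq (flatten [seq [seq j :: x | x <- S j] | j <- s]).
Proof.
move=> us uS; elim: s us => //= j s IH /andP[js us].
rewrite cat_uniq IH // andbT map_inj_uniq ?uS //; last by move=> x y [].
apply/hasPn => x /flattenP[t /mapP[i iin ->] /mapP[y _ ->]].
apply/negP => /mapP[z _ [e _]]; move: js; rewrite -e iin //.
Qed.

Lemma comps_rec (C : Type) (idx : C) (op : Monoid.com_law idx) N (F : seq nat -> C) : 0 < N ->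
  \big[op/idx]_(be <- comps N) F be =
  \big[op/idx]_(1 <= j < N.+1) \big[op/idx]_(be <- comps (N - j)) F (j :: be).
Proof.
move=> N0.
have -> : \big[op/idx]_(1 <= j < N.+1) \big[op/idx]_(be <- comps (N - j)) F (j :: be)
  = \big[op/idx]_(x <- flatten [seq [seq j :: be | be <- comps (N - j)] | j <- iota 1 N]) F x.
  rewrite big_flatten /= big_map /index_iota subSS subn0; apply: eq_bigr => j _.
  by rewrite big_map.
apply: perm_big; apply: uniq_perm.
- exact: uniq_comps.
- apply: uniq_flat_cons; [exact: iota_uniq | move=> j; exact: uniq_comps].
move=> x; rewrite mem_comps; apply/idP/flattenP.
- move=> /andP[px /eqP sx]; case: x px sx => [|j x] /=; first by move=> _ sx; move: N0; rewrite -sx.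
  move=> /andP[j0 px] sx.
  exists [seq j :: be | be <- comps (N - j)].
    by apply: (map_f (fun j => [seq j :: be | be <- comps (N - j)])); rewrite mem_iota; lia.
  by apply: (map_f (cons j)); rewrite mem_comps /is_comp px /=; apply/eqP; lia.
- move=> [t /mapP[j jin ->] /mapP[y]]; rewrite mem_comps => /andP[py /eqP sy] ->.
  move: jin; rewrite mem_iota => jin.
  rewrite /is_comp /= py andbT; apply/andP; split; first lia.
  apply/eqP; lia.
Qed.

Import GRing.Theory.
Local Open Scope ring_scope.
Arguments rf : simpl never.
Arguments setc : simpl never.


Section Ring.
Variable C : comNzRingType.

Definition conv (f g : seq nat -> C) (ga : seq nat) : C :=
  \sum_(i < (size ga).+1) f (take i ga) * g (drop i ga).

Lemma coef_cat (x y : nsym C) ga : nsym_coef (x ++ y) ga = nsym_coef x ga + nsym_coef y ga.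
Proof. by rewrite /nsym_coef big_cat. Qed.

Lemma coef_flatten (L : seq (nsym C)) ga : nsym_coef (flatten L) ga = \sum_(x <- L) nsym_coef x ga.
Proof. by rewrite /nsym_coef big_flatten. Qed.

Lemma coef_scale c (x : nsym C) ga : nsym_coef (nsym_scale c x) ga = c * nsym_coef x ga.
Proof. by rewrite /nsym_coef /nsym_scale big_map mulr_sumr. Qed.

Lemma coef_omega (x : nsym C) ga :
  nsym_coef (omega x) ga = \sum_(p <- x) p.1 * nsym_coef (LamC C (rev p.2)) ga.
Proof.
rewrite /omega coef_flatten big_map; apply: eq_bigr => p _; exact: coef_scale.
Qed.

Lemma coef_uniq (L : seq (seq nat)) (f : seq nat -> C) ga : uniq L ->
  nsym_coef [seq (f be, be) | be <- L] ga = if ga \in L then f ga else 0.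
Proof.
move=> uL; rewrite /nsym_coef big_map /=; case: ifP => H.
  rewrite big_mkcond (bigD1_seq ga) //= eqxx big1 ?addr0 // => i /negbTE ->.
  by [].
by rewrite big1_seq // => i /andP[/eqP -> ]; rewrite H.
Qed.

Lemma coef_one ga : nsym_coef (nsym_one C) ga = if ga == [::] then 1 else 0.
Proof. by rewrite /nsym_coef /= big_cons big_nil eq_sym; case: ifP; rewrite ?addr0. Qed.

Lemma sum_take_drop (p q ga : seq nat) (u v : C) :
  \sum_(i < (size ga).+1) (if p == take i ga then u else 0) * (if q == drop i ga then v else 0)
  = if p ++ q == ga then u * v else 0.
Proof.
case: eqP => [<-|ne].
  have ip : (size p < (size (p ++ q)).+1)%N by rewrite size_cat; lia.
  rewrite (bigD1 (Ordinal ip)) //= take_size_cat // drop_size_cat // !eqxx big1 ?addr0 //.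
  move=> [j jlt] /eqP ni; case: eqP => [e|]; last by rewrite mul0r.
  exfalso; apply: ni; apply/val_inj => /=.
  move: e => /= e; have := f_equal size e; move: jlt; rewrite size_take /=.
  case: (ltnP j (size (p ++ q))) => h1 h2 h3; lia.
rewrite big1 // => i _; case: eqP => [e1|]; case: eqP => [e2|]; rewrite ?mulr0 ?mul0r //.
by exfalso; apply: ne; rewrite e1 e2 cat_take_drop.
Qed.

Lemma coef_mul (x y : nsym C) ga :
  nsym_coef (nsym_mul x y) ga = conv (nsym_coef x) (nsym_coef y) ga.
Proof.
rewrite /nsym_mul /nsym_coef /conv big_mkcond big_allpairs_dep /=.
have E (s t : seq nat) :
  (\sum_(p <- x | p.2 == s) p.1) * (\sum_(q <- y | q.2 == t) q.1) =
  \sum_(p <- x) \sum_(q <- y) ((if p.2 == s then p.1 else 0) * (if q.2 == t then q.1 else 0)).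
  rewrite big_mkcond big_distrl /=; apply: eq_bigr => p _.
  rewrite big_distrr big_mkcond /=; apply: eq_bigr => q _.
  by case: (q.2 == t); rewrite ?mulr0.
under [RHS]eq_bigr => i _ do rewrite E.
rewrite [RHS]exchange_big /=; apply: eq_bigr => p _.
rewrite [RHS]exchange_big /=; apply: eq_bigr => q _.
by rewrite -sum_take_drop.
Qed.

Lemma is_comp_rf n g b : posl b -> sumn b = n -> is_comp n g && refines g b = rf g b.
Proof.
move=> pb sb; case ic: (is_comp n g) => /=.
  by move: ic => /andP[pg /eqP sg]; apply: rf_refines => //; rewrite sg.
case H: (rf g b) => //; have [pg _ sg _] := rf1 H.
by move: ic; rewrite /is_comp pg sg sb eqxx.
Qed.

Lemma is_comp1 k g : (0 < k)%N -> is_comp k g = rf g [:: k].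
Proof.
move=> k0; rewrite -(@is_comp_rf k g [:: k]) /= ?k0 ?addn0 //.
by rewrite /refines andbT.
Qed.

Lemma coef_Lam k ga : (0 < k)%N ->
  nsym_coef (Lam C k) ga = if rf ga [:: k] then (-1) ^+ (k - size ga) else 0.
Proof.
move=> k0; rewrite /Lam coef_uniq ?uniq_comps // mem_comps is_comp1 //.
Qed.

Lemma coef_Bhat (a b : C) al ga : posl al ->
  nsym_coef (Bhat a b al) ga =
  if rf ga al then a ^+ (sumn al - size ga) * b ^+ (size ga - size al) else 0.
Proof.
move=> pal; rewrite /Bhat coef_uniq ?filter_uniq ?uniq_comps //.
rewrite mem_filter andbC mem_comps is_comp_rf //.
exact: uniq_flat_seqs.
Qed.

Lemma exprS' (x : C) m p q : m = (p + q)%N -> x ^+ m = x ^+ p * x ^+ q.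
Proof. by move=> ->; rewrite exprD. Qed.

Lemma conv_nil (f g : seq nat -> C) : conv f g [::] = f [::] * g [::].
Proof. by rewrite /conv big_ord_recl big_ord0 addr0. Qed.

Lemma conv_cons (f g : seq nat -> C) x s : conv f g (x :: s) =
  f [::] * g (x :: s) + \sum_(i < (size s).+1) f (x :: take i s) * g (drop i s).
Proof. by rewrite /conv big_ord_recl. Qed.

Lemma LamC_cons k de : LamC C (k :: de) = nsym_mul (Lam C k) (LamC C de).
Proof. by []. Qed.

Lemma coef_LamC de ga : posl de ->
  nsym_coef (LamC C de) ga = if rf ga de then (-1) ^+ (sumn de - size ga) else 0.
Proof.
elim: ga de => [|g ga IH] [|k de] pde.
- by rewrite coef_one.
- rewrite LamC_cons coef_mul conv_nil coef_Lam ?rf_nc ?mul0r //.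
  by case/andP: pde.
- by rewrite coef_one rf_cn.
case/andP: pde => k0 pde.
rewrite LamC_cons coef_mul conv_cons coef_Lam // rf_nc mul0r add0r.
rewrite rf_cons.
have cL s : nsym_coef (Lam C k) (g :: s) = if rf (g :: s) [:: k] then (-1) ^+ (k - (size s).+1) else 0.
  by rewrite coef_Lam.
under eq_bigr => i _ do rewrite cL rf_cons.
case g0 : (0 < g)%N => /=; last by rewrite big1 // => i _; rewrite mul0r.
case: (ltngtP g k) => gk.
-
  have E i : (if rf (take i ga) [:: (k - g)%N] then (-1) ^+ (k - (size (take i ga)).+1)%N else 0) *
     nsym_coef (LamC C de) (drop i ga) =
     (-1) ^+ g.-1 * (nsym_coef (Lam C (k - g)%N) (take i ga) * nsym_coef (LamC C de) (drop i ga)).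
    rewrite coef_Lam ?subn_gt0 //; case H: (rf _ _); last by rewrite !mul0r mulr0.
    have [pt _ /= s1 s2] := rf1 H; have s3 := size_le_sumn pt.
    rewrite mulrA -(@exprS' _ (k - (size (take i ga)).+1)%N) //; lia.
  under eq_bigr => i _ do rewrite E.
  rewrite -mulr_sumr -/(conv _ _ _) -coef_mul.
  rewrite (IH ((k - g)%N :: de)) /= ?subn_gt0 ?gk //.
  case H: (rf _ _); last by rewrite mulr0.
  have [pga _ /= sg _] := rf1 H; have := size_le_sumn pga => s3.
  by rewrite -exprD; congr (_ ^+ _); lia.
- by rewrite big1 // => i _; rewrite mul0r.
- subst g; rewrite big_ord_recl big1 ?addr0 ?rf_nil.
    rewrite /= take0 drop0 /= IH //; case H: (rf _ _); last by rewrite mulr0.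
    have [pga _ /= sg _] := rf1 H; have := size_le_sumn pga => s3.
    by rewrite /= -exprD; congr (_ ^+ _); lia.
  move=> [i ilt] _ /=; rewrite rf_nil.
  case: ga ilt IH => //= y ga _ _; by rewrite mul0r.
Qed.

Lemma rf_head_le x g k b : rf (x :: g) (k :: b) -> (x <= k)%N.
Proof. by rewrite rf_cons => /andP[_]; case: (ltngtP x k) => // [/ltnW|->]. Qed.

Definition Tm (a b : C) n al de be : C :=
  if rf be al && rf de be then a ^+ (n - size be)%N * b ^+ (size be - size al)%N else 0.

Lemma D_eq (a b : C) de : forall n al, n = sumn al ->
  \sum_(be <- comps n) Tm a b n al de be =
  if rf de al then a ^+ (n - size de)%N * (a + b) ^+ (size de - size al)%N else 0.
Proof.
elim: de => [|d de IH] n al nE.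
  case: (posnP n) => [n0|n0].
    move: n0 nE => -> nE; rewrite comps0 big_seq1 /Tm rf_nn andbT rf_nil_l.
    by case: al nE => [|k al] //= _; rewrite !expr0 mulr1.
  rewrite big1_seq; last first.
    move=> be; rewrite mem_comps => /andP[_ /andP[_ /eqP sb]].
    by rewrite /Tm rf_nil_l; case: be sb => [|y be] /=; [lia| rewrite andbF].
  by rewrite rf_nil_l; case: al nE => [|k al] //= nE; lia.
case: (posnP n) => [n0|n0].
  move: n0 nE => -> nE; rewrite comps0 big_seq1 /Tm rf_cn andbF.
  case H: (rf _ _) => //; have [/= /andP[p _] _ s _] := rf1 H; lia.
case: al nE => [|k al] nE; first by move: n0; rewrite nE.
simpl in nE.
rewrite comps_rec //.
case d0: (0 < d)%N; last first.
  rewrite rf_cons d0 /= big1 // => j _; rewrite big1 // => be _.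
  by rewrite /Tm (rf_cons d) d0 andbF.
have d1 : (0 < d)%N by rewrite d0.
case: (ltngtP k d) => kd.
- rewrite big1; last first.
    move=> j _; rewrite big1 // => be _; rewrite /Tm.
    case H: (_ && _) => //; case/andP: H => /rf_head_le h1 /rf_head_le h2; lia.
  by case H: (rf _ _) => //; move: H => /rf_head_le; lia.
- have dn : (d <= n)%N by lia.
  rewrite (@big_cat_nat _ _ _ d) //; last lia.
  have Z : \sum_(1 <= j < d) \sum_(be <- comps (n - j)) Tm a b n (k :: al) (d :: de) (j :: be) = 0.
    rewrite big_nat_cond big1 // => j /andP[/andP[_ jd] _]; rewrite big1 // => be _; rewrite /Tm.
    case H: (_ && _) => //; case/andP: H => _ /rf_head_le; lia.
  rewrite Z /= add0r.
  rewrite big_ltn; last lia.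
  set X := \sum_(be <- comps (n - d)) Tm a b (n - d) ((k - d)%N :: al) de be.
  have XE : X = if rf de ((k - d)%N :: al) then
     a ^+ (n - d - size de)%N * (a + b) ^+ (size de - (size al).+1)%N else 0.
    by rewrite /X IH //= ; lia.
  have T1 : \sum_(be <- comps (n - d)) Tm a b n (k :: al) (d :: de) (d :: be) = a ^+ (d - 1)%N * b * X.
    rewrite /X mulr_sumr big_seq [RHS]big_seq; apply: eq_bigr => be.
    rewrite mem_comps => /andP[pbe /eqP sbe].
    rewrite /Tm !rf_cons d0 eqxx (ltn_eqF kd) kd /=.
    case H: (_ && _); last by rewrite mulr0.
    case/andP: H => /rf1 [_ _ _ /= s1] _; have := size_le_sumn pbe => s2.
    move: s1 s2 sbe; set s := size be => s1 s2 sbe.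
    rewrite (@exprS' a (n - (size be).+1)%N (d - 1)%N (n - d - size be)%N); last lia.
    rewrite (@exprS' b ((size be).+1 - (size al).+1)%N 1 (size be - (size al).+1)%N); last lia.
    by rewrite expr1; ring.
  have T2 : \sum_(d.+1 <= j < n.+1) \sum_(be <- comps (n - j)) Tm a b n (k :: al) (d :: de) (j :: be)
      = a ^+ d * X.
    rewrite /X (@comps_rec _ _ _ (n - d)); last lia.
    rewrite mulr_sumr -[d.+1]add1n big_addn.
    have -> : (n.+1 - d = (n - d).+1)%N by lia.
    apply: eq_big_nat => j /andP[j1 jn].
    have -> : (n - (j + d) = n - d - j)%N by lia.
    rewrite mulr_sumr big_seq [RHS]big_seq; apply: eq_bigr => be.
    rewrite mem_comps => /andP[pbe /eqP sbe].
    have e1 : rf ((j + d)%N :: be) (k :: al) = rf (j :: be) ((k - d)%N :: al).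
      rewrite !rf_cons; have -> : (0 < j + d)%N by lia.
      have -> : (0 < j)%N by lia.
      have -> : (j + d == k) = (j == k - d)%N by apply/eqP/eqP; lia.
      have -> : (j + d < k)%N = (j < k - d)%N by apply/idP/idP; lia.
      have -> : (k - (j + d) = k - d - j)%N by lia.
      by [].
    have e2 : rf (d :: de) ((j + d)%N :: be) = rf de (j :: be).
      rewrite rf_cons d0 /=; have -> : (d == j + d) = false by apply/eqP; lia.
      have -> : (d < j + d)%N by lia.
      by rewrite addnK.
    rewrite /Tm e1 e2.
    case H: (_ && _); last by rewrite mulr0.
    have := size_le_sumn pbe => s2; move: s2 sbe; set s := size be => s2 sbe.
    rewrite /= (@exprS' a (n - (size be).+1)%N d (n - d - (size be).+1)%N); last lia.
    by rewrite mulrA.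
  rewrite T1 T2 XE rf_cons d0 (ltn_eqF kd) kd.
  case H: (rf _ _); last by rewrite !mulr0 addr0.
  have [pde _ /= s1 s2] := rf1 H; have := size_le_sumn pde => s3.
  rewrite /= (@exprS' a (n - (size de).+1)%N (d - 1)%N (n - d - size de)%N); last lia.
  rewrite (@exprS' (a + b) ((size de).+1 - (size al).+1)%N 1 (size de - (size al).+1)%N); last lia.
  rewrite (@exprS' a d (d - 1)%N 1); last lia.
  by rewrite !expr1; ring.
- subst k.
  have dn : (d <= n)%N by lia.
  rewrite (@big_cat_nat _ _ _ d) //; last lia.
  have Z : \sum_(1 <= j < d) \sum_(be <- comps (n - j)) Tm a b n (d :: al) (d :: de) (j :: be) = 0.
    rewrite big_nat_cond big1 // => j /andP[/andP[_ jd] _]; rewrite big1 // => be _; rewrite /Tm.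
    case H: (_ && _) => //; case/andP: H => _ /rf_head_le; lia.
  rewrite Z /= add0r.
  rewrite big_ltn; last lia.
  have Z2 : \sum_(d.+1 <= j < n.+1) \sum_(be <- comps (n - j)) Tm a b n (d :: al) (d :: de) (j :: be) = 0.
    rewrite big_nat_cond big1 // => j /andP[/andP[jd _] _]; rewrite big1 // => be _; rewrite /Tm.
    case H: (_ && _) => //; case/andP: H => /rf_head_le; lia.
  rewrite Z2 /= addr0.
  have -> : \sum_(be <- comps (n - d)) Tm a b n (d :: al) (d :: de) (d :: be)
     = a ^+ (d - 1)%N * \sum_(be <- comps (n - d)) Tm a b (n - d) al de be.
    rewrite mulr_sumr big_seq [RHS]big_seq; apply: eq_bigr => be.
    rewrite mem_comps => /andP[pbe /eqP sbe].
    rewrite /Tm !rf_cons d0 eqxx /=.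
    case H: (_ && _); last by rewrite mulr0.
    have := size_le_sumn pbe => s2; move: s2 sbe; set s := size be => s2 sbe.
    rewrite (@exprS' a (n - (size be).+1)%N (d - 1)%N (n - d - size be)%N); last lia.
    by rewrite subSS mulrA.
  rewrite IH; last lia.
  rewrite rf_cons d0 eqxx /=.
  case H: (rf _ _); last by rewrite mulr0.
  have [pde _ /= s1 s2] := rf1 H; have := size_le_sumn pde => s3.
  rewrite (@exprS' a (n - (size de).+1)%N (d - 1)%N (n - d - size de)%N); last lia.
  by rewrite subSS mulrA.
Qed.

Lemma main_gen (a b : C) al : posl al ->
  nsym_eq (omega (Bhat a b al)) (Bhat (- a) (a + b) (rev al)).
Proof.
move=> pal ga; rewrite [RHS]coef_Bhat ?all_rev // coef_omega.
rewrite /Bhat big_map big_filter /=.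
set n := sumn al.
transitivity (\sum_(be <- comps n) Tm a b n al (rev ga) be * (-1) ^+ (n - size ga)%N).
  rewrite big_mkcond big_seq [RHS]big_seq; apply: eq_bigr => be.
  rewrite mem_comps => ic.
  have [pbe sbe] : posl be /\ sumn be = n by case/andP: ic => ? /eqP.
  rewrite coef_LamC ?all_rev // sumn_rev sbe.
  have -> : refines be al = rf be al by rewrite -(@is_comp_rf n be al pal erefl) ic.
  have -> : rf ga (rev be) = rf (rev ga) be by rewrite -rf_rev revK.
  rewrite /Tm; case: (rf be al); case: (rf (rev ga) be); rewrite /= ?mul0r ?mulr0 //.
rewrite -big_distrl /= D_eq // size_rev sumn_rev.
have -> : rf ga (rev al) = rf (rev ga) al by rewrite -rf_rev revK.
case: (rf (rev ga) al); last by rewrite mul0r.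
rewrite size_rev -/n [(- a) ^+ _]exprNn.
by rewrite mulrC mulrA.
Qed.

End Ring.


From mathcomp Require Import complex.
From mathcomp Require Import reals.
Import Order.TTheory GRing.Theory Num.Theory.
Local Open Scope ring_scope.

Theorem proposition4p12 (R : realType) (al : seq nat) (a b : R[i]) :
  all (fun k => (0 < k)%N) al ->
  nsym_eq (omega (Bhat a b al)) (Bhat (- a) (a + b) (rev al)).
Proof. exact: main_gen. Qed.
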